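(* Let $\Gamma_M$ be a perfect matching graph representing a planar trivalent graph $G$ with perfect matching $M$, and let $\widetilde\Gamma_M$ be obtained from $\Gamma_M$ by a flip move (with the same ordering of matching edges). Then the hypercube of states of $\Gamma_M$ contains a bad face if and only if the hypercube of states of $\widetilde\Gamma_M$ contains a bad face.
   Context: A perfect matching graph $\Gamma_M$ is an embedding in $S^2$ of a planar trivalent graph $G$ together with a perfect matching $M$; fix an ordering $M_1,\dots,M_n$ of the edges of $M$. Resolution configurations: $D=(Z(D),A(D))$ with $Z(D)$ a finite set of circles immersed in $S^2$ (union has only transverse double points) and $A(D)$ a finite totally ordered set of disjoint embedded arcs meeting the circles exactly in their endpoints. Surgery $s_A(D)$ along $A$: in a small disk around $A$ meeting the circles in segments $\alpha$ (ends $z,w$) and $\beta$ (ends $x,y$), $z,x$ on one side of $A$ and $w,y$ on the other, replace $\alpha\cup\beta$ by strands $z$–$y$ and $x$–$w$ crossing once transversally; arcs become $A(D)\setminus\{A\}$. An arc is an $\eta$-, $\Delta$-, or $m$-arc according as surgery along it changes the number of circles by $0,+1,-1$. Resolutions: for a matching edge $e=uv$, let $a,b$ be the other edges at $u$ and $c,d$ those at $v$, with $a,c$ on the same side of $e$. The $0$-resolution removes $u,v,e$, joins $a$–$c$ and $b$–$d$ by disjoint strands parallel to $e$, and places an arc joining these two strands; the $1$-resolution joins $a$–$d$ and $b$–$c$ by strands crossing once, with no arc. For $v\in\{0,1\}^n$, $D_{\Gamma_M}(v)$ takes the $v_i$-resolution at $M_i$; its arcs $A_i$ (for $v_i=0$)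 are ordered by $i$. Bad face: states $v,u\in\{0,1\}^n$ differing exactly in two coordinates $i\neq j$ with $v_i=v_j=0$, $u_i=u_j=1$, such that (for some ordering of $\{i,j\}$) $A_i$ is an $\eta$-arc of $D_{\Gamma_M}(v)$, $A_j$ is an $\eta$-arc of $s_{A_i}(D_{\Gamma_M}(v))$, $A_j$ is a $\Delta$-arc of $D_{\Gamma_M}(v)$, and $A_i$ is an $m$-arc of $s_{A_j}(D_{\Gamma_M}(v))$ (a face where $m\circ\Delta=\eta\circ\eta$). Flip move: choose a closed disk $B\subset S^2$ whose boundary avoids vertices and meets $\Gamma_M$ transversally in $k\in\{0,1,2\}$ points in interiors of edges; replace $\Gamma_M\cap B$ by its image under a reflection of $B$ fixing those $k$ points ($k$-flip). *)

(* Defs.v *)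
(* Perfect matching graphs are encoded as combinatorial maps
   (rotation systems) on S^2. *)
From mathcomp Require Import all_boot all_fingroup.
Set Implicit Arguments. Unset Strict Implicit. Unset Printing Implicit Defensive.

Section PMG.
Variables (D : finType) (alpha sigma : {perm D}) (n : nat) (ord : 'I_n -> D).

(* darts = half-edges; alpha = edge involution; sigma = rotation at vertices
   (vertices = sigma-orbits); the i-th matching edge M_i = {ord i, alpha (ord i)}. *)

Definition mdart (d : D) : bool := [exists i, (d == ord i) || (d == alpha (ord i))].

Definition glink : rel D :=
  fun x y => [|| y == alpha x, y == sigma x, x == alpha y | x == sigma y].
Definition ncomp : nat := n_comp glink [pred _ | true].

(* genus 0 (Euler formula V - E + F = 2c for a combinatorial map) *)
Definition planar_map : Prop :=
  #|porbits sigma| + #|porbits (sigma * alpha)%g| = #|porbits alpha| + 2 * ncomp.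

Definition is_pmg : Prop :=
  [/\ forall d, alpha (alpha d) = d /\ alpha d != d,
      forall d, [/\ sigma d != d, sigma (sigma d) != d & sigma (sigma (sigma d)) = d],
      planar_map,
      forall i j : 'I_n, i != j -> ord j != ord i /\ ord j != alpha (ord i)
    & forall d, #|[set d' in porbit sigma d | mdart d']| = 1].

(* resolution data: r i = true means the 1-resolution (crossing strands) is
   taken at M_i, r i = false the 0-resolution (parallel strands). *)
Definition sbit (r : {ffun 'I_n -> bool}) (m : D) : bool :=
  [exists i, r i && ((m == ord i) || (m == alpha (ord i)))].

Definition matd (d : D) : D := if mdart (sigma d) then sigma d else (sigma^-1)%g d.

(* the non-matching dart joined to d by the strand through the matching edge at d *)
Definition partner (r : {ffun 'I_n -> bool}) (d : D) : D :=
  let m := matd d in let m' := alpha m in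
  if (d == sigma m) != sbit r m then sigma (sigma m') else sigma m'.

(* resolution configuration: local resolution data and the set of arcs *)
Definition rconf := ({ffun 'I_n -> bool} * {set 'I_n})%type.

Definition state_conf (v : {ffun 'I_n -> bool}) : rconf := (v, [set i | ~~ v i]).

(* surgery along the arc A_i: parallel strands replaced by crossing strands *)
Definition surgery (c : rconf) (i : 'I_n) : rconf :=
  ([ffun k => if k == i then true else c.1 k], c.2 :\ i).

Definition clink (r : {ffun 'I_n -> bool}) : rel D :=
  fun x y => (y == alpha x) || (y == partner r x).

Definition circles (c : rconf) : nat := n_comp (clink c.1) [pred d | ~~ mdart d].

Definition eta_arc (c : rconf) i := (i \in c.2) && (circles (surgery c i) == circles c).
Definition delta_arc (c : rconf) i := (i \in c.2) && (circles (surgery c i) == (circles c).+1).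
Definition m_arc (c : rconf) i := (i \in c.2) && ((circles (surgery c i)).+1 == circles c).

Definition has_bad_face : Prop :=
  exists (v u : {ffun 'I_n -> bool}) (i j : 'I_n),
    [/\ i != j, v i = false /\ v j = false, u i = true /\ u j = true
      & forall k, k != i -> k != j -> u k = v k] /\
    [/\ eta_arc (state_conf v) i, eta_arc (surgery (state_conf v) i) j,
        delta_arc (state_conf v) j & m_arc (surgery (state_conf v) j) i].

End PMG.

(* flip move on the vertex set S (a sigma-closed set of darts) of the part of
   the graph inside the disk: rotations inside are reversed; at most 2 edges
   cross between inside and outside. *)
Definition is_flip (D : finType) (alpha sigma sigma' : {perm D}) (S : {set D}) : Prop :=
  [/\ forall d, (sigma d \in S) = (d \in S),
      #|[set d in S | alpha d \notin S]| <= 2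
    & forall d, sigma' d = if d \in S then (sigma^-1)%g d else sigma d].

(* Main.v *)
Require Import Defs.
From mathcomp Require Import all_boot all_fingroup.
Set Implicit Arguments. Unset Strict Implicit. Unset Printing Implicit Defensive.

Lemma even_inv (T : finType) (A : {set T}) (f : T -> T) :
  (forall x, x \in A -> [/\ f x \in A, f (f x) = x & f x != x]) -> ~~ odd #|A|.
Proof.
move: {2}#|A| (leqnn #|A|) => k; elim: k A => [|k IH] A.
  by rewrite leqn0 => /eqP ->.
move=> HA Hf; case: (set_0Vmem A) => [-> | [x xA]]; first by rewrite cards0.
have [fxA ffx fxx] := Hf x xA.
set B := A :\ x :\ f x.
have cB : #|A| = #|B|.+2.
  rewrite (cardsD1 x A) xA (cardsD1 (f x) (A :\ x)) !inE fxx fxA /=.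
  by rewrite add1n.
suff: ~~ odd #|B| by rewrite cB /= negbK.
apply: IH.
  by move: HA; rewrite cB => /ltnW.
move=> y; rewrite !inE => /and3P[yfx yx yA].
have [fyA ffy fyy] := Hf y yA.
split=> //; rewrite fyA andbT; apply/andP; split.
  by apply: contra yx => /eqP e; rewrite -ffy e ffx.
by apply: contra yfx => /eqP e; rewrite -ffy e.
Qed.

Lemma connect_closedP (T : finType) (r : rel T) (K : pred T) x y :
  (forall u v, K u -> r u v -> K v) -> K x -> connect r x y -> K y.
Proof.
move=> HK Kx /connectP[pth pp ->]; elim: pth x Kx pp => //= z pth IH x Kx.
by case/andP=> rxz pz; apply: IH pz; apply: HK rxz.
Qed.

Lemma connect_restrict (T : finType) (r1 r2 : rel T) (N : pred T) :
  (forall x y, N x -> r1 x y = r2 x y) ->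
  (forall x y, N x -> r1 x y -> N y) ->
  forall x, N x -> connect r1 x =1 connect r2 x.
Proof.
move=> E C x Nx y; apply/idP/idP.
  move/connectP=> [pth pp ->]; apply/connectP; exists pth => //.
  elim: pth x Nx pp => //= z pth IH x Nx /andP[rxz pz].
  rewrite -(E x z Nx) rxz /=; apply: IH pz; exact: (C x z Nx rxz).
move/connectP=> [pth pp ->]; apply/connectP; exists pth => //.
elim: pth x Nx pp => //= z pth IH x Nx /andP[rxz pz].
rewrite -(E x z Nx) in rxz; rewrite rxz /=; apply: IH pz; exact: (C x z Nx rxz).
Qed.

Lemma n_comp_restrict (T : finType) (r1 r2 : rel T) (N : pred T) :
  (forall x y, N x -> r1 x y = r2 x y) ->
  (forall x y, N x -> r1 x y -> N y) ->
  n_comp r1 N = n_comp r2 N.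
Proof.
move=> E C; apply: eq_card => x; rewrite !inE.
case Nx: (x \in N); rewrite ?andbF ?andbT //.
by rewrite /roots /root (eq_pick (connect_restrict E C (Nx : N x))).
Qed.
Lemma closure2E (T : finType) (r : rel T) x1 x2 t :
  (t \in closure r (pred2 x1 x2)) = connect r t x1 || connect r t x2.
Proof.
rewrite /closure_mem unfold_in /=.
apply/pred0Pn/orP.
  by case=> z /andP[/= h /pred2P[]<-]; [left|right].
by case=> h; [exists x1|exists x2]; rewrite !inE /= ?eqxx ?orbT andbT.
Qed.
Lemma n_comp_split (T : finType) (r : rel T) (A B : pred T) :
  n_comp r A = #|[pred t | roots r t && (A t && B t)]| + #|[pred t | roots r t && (A t && ~~ B t)]|.
Proof.
rewrite /n_comp_mem -(cardID B); congr (_ + _); apply: eq_card => t; rewrite !inE;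
  have -> : (t \in A) = A t by [];
  have -> : (t \in B) = B t by [];
  by case: (roots r t); case: (A t); case: (B t).
Qed.
Lemma all8 (T : eqType) (P : pred T) a1 a2 a3 a4 a5 a6 a7 a8 t :
  P a1 -> P a2 -> P a3 -> P a4 -> P a5 -> P a6 -> P a7 -> P a8 ->
  t \in [:: a1; a2; a3; a4; a5; a6; a7; a8] -> P t.
Proof.
move=> h1 h2 h3 h4 h5 h6 h7 h8; rewrite !inE.
by do 7 (case/orP=> [/eqP->//|]); move/eqP->.
Qed.

Section Abstract.
Variables (T : finType) (N In : {pred T}) (a p q : T -> T) (s : seq T).
Hypothesis Ha : forall x, x \in N ->
  [/\ a x \in N, a (a x) = x, a x != x & (a x \in In) = (x \in In)].
Hypothesis Hp : forall x, x \in N -> [/\ p x \in N, p (p x) = x & p x != x].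
Hypothesis Hq : forall x, x \in N -> q x \in N /\ q (q x) = x.
Hypothesis Hsp : forall x, x \in N -> (p x \in s) = (x \in s).
Hypothesis Hnc : forall x, x \in N -> x \notin s ->
  (p x \in In) = (x \in In) /\ q x = p x.

Definition ee := [rel x y | (x \in N) && ((y == a x) || (y == p x))].
Definition ee' := [rel x y | (x \in N) && ((y == a x) || (y == q x))].
Definition e0 := [rel x y | (x \in N) && ((y == a x) || ((x \notin s) && (y == p x)))].

Lemma e0_sym1 x y : e0 x y -> e0 y x.
Proof.
case/andP=> Nx /orP[/eqP->|/andP[xs /eqP->]].
  by have [aN aa _ _] := Ha Nx; rewrite /= aN aa eqxx.
by have [pN pp _] := Hp Nx; rewrite /= pN pp eqxx Hsp // xs orbT.
Qed.

Lemma ee_sym1 x y : ee x y -> ee y x.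
Proof.
case/andP=> Nx /orP[/eqP->|/eqP->].
  by have [aN aa _ _] := Ha Nx; rewrite /= aN aa eqxx.
by have [pN pp _] := Hp Nx; rewrite /= pN pp eqxx orbT.
Qed.

Lemma ee'_sym1 x y : ee' x y -> ee' y x.
Proof.
case/andP=> Nx /orP[/eqP->|/eqP->].
  by have [aN aa _ _] := Ha Nx; rewrite /= aN aa eqxx.
by have [qN qq] := Hq Nx; rewrite /= qN qq eqxx orbT.
Qed.

Lemma symP (r : rel T) : (forall x y, r x y -> r y x) -> connect_sym r.
Proof. by move=> H; apply: sym_connect_sym => x y; apply/idP/idP; apply: H. Qed.

Lemma e0_csym : connect_sym e0. Proof. exact: symP e0_sym1. Qed.
Lemma ee_csym : connect_sym ee. Proof. exact: symP ee_sym1. Qed.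
Lemma ee'_csym : connect_sym ee'. Proof. exact: symP ee'_sym1. Qed.

Lemma e0_ee x y : e0 x y -> ee x y.
Proof. by case/andP=> Nx /orP[h|/andP[_ h]]; rewrite /= Nx h ?orbT. Qed.

Lemma e0_ee' x y : e0 x y -> ee' x y.
Proof.
case/andP=> Nx /orP[h|/andP[xs h]]; rewrite /= Nx ?h //.
by have [_ E] := Hnc Nx xs; rewrite E h orbT.
Qed.

Lemma c0_ee x y : connect e0 x y -> connect ee x y.
Proof. by move: x y; apply: (@connect_sub _ e0 ee) => u v h; apply: connect1; apply: e0_ee h. Qed.

Lemma c0_ee' x y : connect e0 x y -> connect ee' x y.
Proof. by move: x y; apply: (@connect_sub _ e0 ee') => u v h; apply: connect1; apply: e0_ee' h. Qed.

Lemma c0_In x y : connect e0 x y -> (y \in In) = (x \in In).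
Proof.
move=> c; apply/eqP; apply: (@connect_closedP _ e0 [pred u | (u \in In) == (x \in In)] x); last 2 first.
- by rewrite /= eqxx.
- exact: c.
move=> u v /= /eqP <- /andP[Nu /orP[/eqP->|/andP[us /eqP->]]].
  by have [_ _ _ ->] := Ha Nu; rewrite eqxx.
by have [-> _] := Hnc Nu us; rewrite eqxx.
Qed.

Lemma c0_N x y : x \in N -> connect e0 x y -> y \in N.
Proof.
move=> Nx c; apply: (@connect_closedP _ e0 [pred u | u \in N] x) => //.
move=> u v /= _ /andP[Nu /orP[/eqP->|/andP[us /eqP->]]].
  by have [] := Ha Nu.
by have [] := Hp Nu.
Qed.

Lemma ee_split x y : ee x y -> e0 x y || ((x \in s) && (y == p x)).
Proof.
case/andP=> Nx /orP[h|yp]; first by rewrite /= Nx h.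
by rewrite /= Nx yp; case: (x \in s); rewrite ?orbT.
Qed.

Lemma ee'_split x y : ee' x y -> e0 x y || ((x \in s) && (y == q x)).
Proof.
case/andP=> Nx /orP[h|yq]; first by rewrite /= Nx h.
case xs: (x \in s); first by rewrite yq orbT.
by have [_ E] := Hnc Nx (negbT xs); rewrite /= Nx -E yq xs /= ?orbT.
Qed.

Lemma notN_ee x y : x \notin N -> connect ee x y -> y = x.
Proof.
move=> Nx c; apply/eqP; apply: (@connect_closedP _ ee [pred u | u == x] x) => //=.
by move=> u v /eqP -> /andP[Nx' _]; rewrite Nx' in Nx.
Qed.

Lemma notN_ee' x y : x \notin N -> connect ee' x y -> y = x.
Proof.
move=> Nx c; apply/eqP; apply: (@connect_closedP _ ee' [pred u | u == x] x) => //=.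
by move=> u v /eqP -> /andP[Nx' _]; rewrite Nx' in Nx.
Qed.

Lemma parity x : uniq s -> x \in N -> ~~ odd (count (connect e0 x) s).
Proof.
move=> us Nx.
pose C := [set y | connect e0 x y].
have CN y : y \in C -> y \in N by rewrite inE; apply: c0_N.
have eC : ~~ odd #|C|.
  apply: (@even_inv _ C a) => y yC; have Ny := CN y yC.
  have [aN aa ay _] := Ha Ny.
  split=> //; move: yC; rewrite !inE => c; apply: connect_trans c _.
  by apply: connect1; rewrite /= Ny eqxx.
pose Cn := C :\: [set y | y \in s].
have eCn : ~~ odd #|Cn|.
  apply: (@even_inv _ Cn p) => y; rewrite !inE => /andP[ys yC].
  have Ny : y \in N by apply: CN; rewrite inE.
  have [pN pp py] := Hp Ny; split=> //.
  rewrite Hsp // ys /=; apply: connect_trans yC _.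
  by apply: connect1; rewrite /= Ny ys eqxx orbT.
have cs : #|C :&: [set y | y \in s]| = count (connect e0 x) s.
  rewrite -size_filter -(card_uniqP (filter_uniq _ us)).
  by apply: eq_card => y; rewrite !inE mem_filter andbC.
move: eC; rewrite -(cardsID [set y | y \in s] C) oddD cs.
by move: eCn; rewrite /Cn; case: (odd _); case: (odd _).
Qed.

Lemma pair_ok u1 u2 : u1 \in N -> u2 \in N ->
  connect e0 u1 u2 || connect e0 (p u1) (p u2) ->
  q u1 = p u2 -> q u2 = p u1 -> q (p u1) = u2 -> q (p u2) = u1 ->
  forall x, x \in [:: u1; u2; p u1; p u2] ->
    connect ee' x (p x) /\ connect ee x (q x).
Proof.
move=> N1 N2 H q1 q2 q3 q4.
have [pN1 pp1 _] := Hp N1; have [pN2 pp2 _] := Hp N2.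
have E1 x y : x \in N -> y == p x -> ee x y by move=> Nx yp; rewrite /= Nx yp orbT.
have E2 x y : x \in N -> y == q x -> ee' x y by move=> Nx yp; rewrite /= Nx yp orbT.
have T1 x y z : connect ee x y -> ee y z -> connect ee x z.
  by move=> c h; apply: connect_trans c (@connect1 _ ee _ _ h).
have T1' x y z : connect ee' x y -> ee' y z -> connect ee' x z.
  by move=> c h; apply: connect_trans c (@connect1 _ ee' _ _ h).
have T2 x y z : ee x y -> connect e0 y z -> connect ee x z.
  by move=> h c; apply: connect_trans (@connect1 _ ee _ _ h) (c0_ee c).
have T2' x y z : ee' x y -> connect e0 y z -> connect ee' x z.
  by move=> h c; apply: connect_trans (@connect1 _ ee' _ _ h) (c0_ee' c).
have S x y : connect e0 x y -> connect e0 y x by rewrite e0_csym.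
move=> x; rewrite !inE => /or4P[] /eqP->; rewrite ?pp1 ?pp2 ?q1 ?q2 ?q3 ?q4.
- case/orP: H => c; split.
  + by apply: T1' (c0_ee' c) (E2 _ _ N2 _); rewrite q2.
  + by apply: T1 (c0_ee c) (E1 _ _ N2 _).
  + by apply: T2' (E2 _ _ N1 _) (S _ _ c); rewrite q1.
  + by apply: T2 (E1 _ _ N1 _) c.
- case/orP: H => c; split.
  + by apply: T1' (c0_ee' (S _ _ c)) (E2 _ _ N1 _); rewrite q1.
  + by apply: T1 (c0_ee (S _ _ c)) (E1 _ _ N1 _).
  + by apply: T2' (E2 _ _ N2 _) c; rewrite q2.
  + by apply: T2 (E1 _ _ N2 _) (S _ _ c).
- case/orP: H => c; split.
  + by apply: T2' (E2 _ _ pN1 _) (S _ _ c); rewrite q3.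
  + by apply: T2 (E1 _ _ pN1 _) c; rewrite pp1.
  + by apply: T1' (c0_ee' c) (E2 _ _ pN2 _); rewrite q4.
  + by apply: T1 (c0_ee c) (E1 _ _ pN2 _); rewrite pp2.
- case/orP: H => c; split.
  + by apply: T2' (E2 _ _ pN2 _) c; rewrite q4.
  + by apply: T2 (E1 _ _ pN2 _) (S _ _ c); rewrite pp2.
  + by apply: T1' (c0_ee' (S _ _ c)) (E2 _ _ pN1 _); rewrite q3.
  + by apply: T1 (c0_ee (S _ _ c)) (E1 _ _ pN1 _); rewrite pp1.
Qed.


Lemma conn_eq : (forall x, x \in s -> connect ee' x (p x) /\ connect ee x (q x)) ->
  connect ee =2 connect ee'.
Proof.
move=> H x y; apply/idP/idP; move: x y.
- apply: (@connect_sub _ ee ee') => x y /ee_split /orP[h|/andP[xs /eqP->]].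
    exact: (@connect1 _ ee' _ _ (e0_ee' h)).
  by case: (H x xs).
- apply: (@connect_sub _ ee' ee) => x y /ee'_split /orP[h|/andP[xs /eqP->]].
    exact: (@connect1 _ ee _ _ (e0_ee h)).
  by case: (H x xs).
Qed.

Lemma cross0 u v : u \in In -> v \notin In -> connect e0 u v = false.
Proof. by move=> Iu Ov; apply/negbTE; apply: contra Ov => /c0_In ->. Qed.

Lemma cross0' u v : u \in In -> v \notin In -> connect e0 v u = false.
Proof. by move=> Iu Ov; rewrite e0_csym; apply: cross0. Qed.

Lemma k1 x1 x2 : s = [:: x1; x2; p x1; p x2] -> uniq s ->
  x1 \in N -> x2 \in N -> x1 \in In -> x2 \in In -> p x1 \notin In -> p x2 \notin In ->
  q x1 = p x2 -> q x2 = p x1 -> q (p x1) = x2 -> q (p x2) = x1 ->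
  n_comp ee N = n_comp ee' N.
Proof.
move=> Es us N1 N2 I1 I2 O1 O2 q1 q2 q3 q4.
have c12 : connect e0 x1 x2.
  have := parity us N1; rewrite Es /= connect0 (cross0 I1 O1) (cross0 I1 O2).
  by case: (connect e0 x1 x2).
apply: eq_n_comp; apply: conn_eq => x; rewrite Es => xs.
by apply: (pair_ok N1 N2 _ q1 q2 q3 q4); rewrite ?c12.
Qed.

Lemma hard x1 x2 u1 u2 :
  s =i [:: x1; x2; u1; u2; p x1; p x2; p u1; p u2] ->
  x1 \in N -> x2 \in N -> u1 \in N -> u2 \in N ->
  x1 \in In -> x2 \in In -> u1 \in In -> u2 \in In ->
  p x1 \notin In -> p x2 \notin In -> p u1 \notin In -> p u2 \notin In ->
  q x1 = p x2 -> q x2 = p x1 -> q (p x1) = x2 -> q (p x2) = x1 ->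
  q u1 = p u2 -> q u2 = p u1 -> q (p u1) = u2 -> q (p u2) = u1 ->
  ~~ connect e0 x1 x2 -> ~~ connect e0 (p x1) (p x2) ->
  connect e0 x1 u1 -> connect e0 x2 u2 ->
  (connect e0 (p x1) (p u1) && connect e0 (p x2) (p u2)) ||
  (connect e0 (p x1) (p u2) && connect e0 (p x2) (p u1)) ->
  n_comp ee N = n_comp ee' N.
Proof.
move=> Es N1 N2 N3 N4 I1 I2 I3 I4 O1 O2 O3 O4 qx1 qx2 qx3 qx4 qu1 qu2 qu3 qu4.
move=> nx ny c1 c2 Hout.
have [pN1 pp1 _] := Hp N1; have [pN2 pp2 _] := Hp N2.
have [pN3 pp3 _] := Hp N3; have [pN4 pp4 _] := Hp N4.
have S u v : connect e0 u v -> connect e0 v u by rewrite e0_csym.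
have Tr u v w : connect e0 u v -> connect e0 v w -> connect e0 u w.
  exact: connect_trans.
pose Q0 t := [|| connect e0 t x1, connect e0 t x2, connect e0 t (p x1)
               | connect e0 t (p x2)].
have Q0T t v : connect e0 t v -> Q0 v -> Q0 t.
  move=> ctv /or4P[] h; apply/or4P;
   [apply: Or41|apply: Or42|apply: Or43|apply: Or44]; exact: Tr ctv h.
have Qs t : t \in s -> Q0 t.
  rewrite Es; apply: (@all8 _ [pred t | Q0 t]); rewrite /= /Q0 ?connect0 ?orbT //.
  - by rewrite (S _ _ c1) ?orbT.
  - by rewrite (S _ _ c2) ?orbT.
  - case/orP: Hout => /andP[h1 h2]; first by rewrite (S _ _ h1) ?orbT.
    by rewrite (S _ _ h2) ?orbT.
  - case/orP: Hout => /andP[h1 h2]; first by rewrite (S _ _ h2) ?orbT.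
    by rewrite (S _ _ h1) ?orbT.
have hQ1 x : ~~ Q0 x -> connect ee x =1 connect e0 x.
  move=> nQ y; apply/idP/idP; last exact: c0_ee.
  apply: (@connect_closedP _ ee (connect e0 x) x) => // u v cu.
  case/ee_split/orP => [h|/andP[us _]]; first exact: Tr _ _ _ cu (@connect1 _ e0 _ _ h).
  by case/negP: nQ; apply: Q0T cu (Qs u us).
have hQ1' x : ~~ Q0 x -> connect ee' x =1 connect e0 x.
  move=> nQ y; apply/idP/idP; last exact: c0_ee'.
  apply: (@connect_closedP _ ee' (connect e0 x) x) => // u v cu.
  case/ee'_split/orP => [h|/andP[us _]]; first exact: Tr _ _ _ cu (@connect1 _ e0 _ _ h).
  by case/negP: nQ; apply: Q0T cu (Qs u us).
rewrite (n_comp_split ee N Q0) (n_comp_split ee' N Q0); congr (_ + _); last first.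
  apply: eq_card => t; rewrite !inE; case qt: (Q0 t); rewrite /= ?andbF //.
  have nq : ~~ Q0 t by rewrite qt.
  by rewrite /roots /root (eq_pick (hQ1 t nq)) (eq_pick (hQ1' t nq)).
have Ee : #|[pred t | roots ee t && (N t && Q0 t)]| =
           n_comp ee (closure ee (pred2 x1 x2)).
  apply: eq_card => t; rewrite !inE closure2E; congr (_ && _).
  apply/idP/idP.
  - case/andP=> _ /or4P[] h.
    + by rewrite (c0_ee h).
    + by rewrite (c0_ee h) orbT.
    + apply/orP; left; apply: (connect_trans (c0_ee h)); apply: (@connect1 _ ee).
      by rewrite /= pN1 pp1 eqxx orbT.
    + apply/orP; right; apply: (connect_trans (c0_ee h)); apply: (@connect1 _ ee).
      by rewrite /= pN2 pp2 eqxx orbT.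
  - move=> h; have Nt : t \in N.
      case: (boolP (t \in N)) => // nt.
      by case/orP: h => /(notN_ee nt) e; move: nt; rewrite -e ?N1 ?N2.
    rewrite (Nt : N t) /=; case qt: (Q0 t) => //; have nq : ~~ Q0 t by rewrite qt.
    move: h; rewrite (hQ1 t nq x1) (hQ1 t nq x2) => h.
    by move: qt; rewrite /Q0; case/orP: h => -> /=; rewrite ?orbT.
have Ee' : #|[pred t | roots ee' t && (N t && Q0 t)]| =
           n_comp ee' (closure ee' (pred2 x1 x2)).
  apply: eq_card => t; rewrite !inE closure2E; congr (_ && _).
  apply/idP/idP.
  - case/andP=> _ /or4P[] h.
    + by rewrite (c0_ee' h).
    + by rewrite (c0_ee' h) orbT.
    + apply/orP; right; apply: (connect_trans (c0_ee' h)); apply: (@connect1 _ ee').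
      by rewrite /= pN1 qx3 eqxx orbT.
    + apply/orP; left; apply: (connect_trans (c0_ee' h)); apply: (@connect1 _ ee').
      by rewrite /= pN2 qx4 eqxx orbT.
  - move=> h; have Nt : t \in N.
      case: (boolP (t \in N)) => // nt.
      by case/orP: h => /(notN_ee' nt) e; move: nt; rewrite -e ?N1 ?N2.
    rewrite (Nt : N t) /=; case qt: (Q0 t) => //; have nq : ~~ Q0 t by rewrite qt.
    move: h; rewrite (hQ1' t nq x1) (hQ1' t nq x2) => h.
    by move: qt; rewrite /Q0; case/orP: h => -> /=; rewrite ?orbT.
rewrite Ee Ee' (n_comp_closure2 ee_csym) (n_comp_closure2 ee'_csym).
have Fnx : connect e0 x1 x2 = false by apply/negbTE.
have Fny : connect e0 (p x1) (p x2) = false by apply/negbTE.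
have Fny' : connect e0 (p x2) (p x1) = false by rewrite e0_csym.
have Fxu : connect e0 x1 u2 = false.
  by apply/negbTE; apply: contra nx => h; apply: Tr h (S _ _ c2).
have Fxu' : connect e0 u2 x1 = false by rewrite e0_csym.
have Xx1x1 := cross0 I1 O1.
have Yx1x1 := cross0' I1 O1.
have Xx1x2 := cross0 I1 O2.
have Yx1x2 := cross0' I1 O2.
have Xx1u1 := cross0 I1 O3.
have Yx1u1 := cross0' I1 O3.
have Xx1u2 := cross0 I1 O4.
have Yx1u2 := cross0' I1 O4.
have Xx2x1 := cross0 I2 O1.
have Yx2x1 := cross0' I2 O1.
have Xx2x2 := cross0 I2 O2.
have Yx2x2 := cross0' I2 O2.
have Xx2u1 := cross0 I2 O3.
have Yx2u1 := cross0' I2 O3.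
have Xx2u2 := cross0 I2 O4.
have Yx2u2 := cross0' I2 O4.
have Xu1x1 := cross0 I3 O1.
have Yu1x1 := cross0' I3 O1.
have Xu1x2 := cross0 I3 O2.
have Yu1x2 := cross0' I3 O2.
have Xu1u1 := cross0 I3 O3.
have Yu1u1 := cross0' I3 O3.
have Xu1u2 := cross0 I3 O4.
have Yu1u2 := cross0' I3 O4.
have Xu2x1 := cross0 I4 O1.
have Yu2x1 := cross0' I4 O1.
have Xu2x2 := cross0 I4 O2.
have Yu2x2 := cross0' I4 O2.
have Xu2u1 := cross0 I4 O3.
have Yu2u1 := cross0' I4 O3.
have Xu2u2 := cross0 I4 O4.
have Yu2u2 := cross0' I4 O4.
case/orP: Hout => /andP[o1 o2].
- have Fa : connect e0 (p x1) (p u2) = false.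
    by apply/negbTE; apply: contra ny => h; apply: Tr h (S _ _ o2).
  have Fb : connect e0 (p x2) (p u1) = false.
    by apply/negbTE; apply: contra ny => h; apply: Tr o1 (S _ _ h).
  have Fa' : connect e0 (p u2) (p x1) = false by rewrite e0_csym.
  have Fb' : connect e0 (p u1) (p x2) = false by rewrite e0_csym.
  have h1 : connect ee x1 x2 = false.
    apply/negbTE/negP => h.
    have : [pred v | connect e0 x1 v || connect e0 (p x1) v] x2.
      apply: (@connect_closedP _ ee _ x1 x2); last exact: h; last by rewrite /= connect0.
      move=> v w /= Kv /ee_split /orP[h0|/andP[vs /eqP->]].
        by case/orP: Kv => k1; rewrite (Tr _ _ _ k1 (@connect1 _ e0 _ _ h0)) ?orbT.
      move: Kv; apply/implyP; move: vs; rewrite Es.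
      apply: (all8 (P := [pred v | (connect e0 x1 v || connect e0 (p x1) v) ==>
                               (connect e0 x1 (p v) || connect e0 (p x1) (p v))]));
      by rewrite /= ?connect0 ?pp1 ?pp2 ?pp3 ?pp4 ?qx1 ?qx2 ?qx3 ?qx4 ?qu1 ?qu2 ?qu3 ?qu4 ?c1 ?c2 ?o1 ?o2 ?Fnx ?Fny ?Fny' ?Fxu ?Fxu' ?Fa ?Fb ?Fa' ?Fb' ?Xx1x1 ?Yx1x1 ?Xx1x2 ?Yx1x2 ?Xx1u1 ?Yx1u1 ?Xx1u2 ?Yx1u2 ?Xx2x1 ?Yx2x1 ?Xx2x2 ?Yx2x2 ?Xx2u1 ?Yx2u1 ?Xx2u2 ?Yx2u2 ?Xu1x1 ?Yu1x1 ?Xu1x2 ?Yu1x2 ?Xu1u1 ?Yu1u1 ?Xu1u2 ?Yu1u2 ?Xu2x1 ?Yu2x1 ?Xu2x2 ?Yu2x2 ?Xu2u1 ?Yu2u1 ?Xu2u2 ?Yu2u2 /= ?orbT ?connect0 ?orbT.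
    by rewrite /= ?connect0 ?pp1 ?pp2 ?pp3 ?pp4 ?qx1 ?qx2 ?qx3 ?qx4 ?qu1 ?qu2 ?qu3 ?qu4 ?c1 ?c2 ?o1 ?o2 ?Fnx ?Fny ?Fny' ?Fxu ?Fxu' ?Fa ?Fb ?Fa' ?Fb' ?Xx1x1 ?Yx1x1 ?Xx1x2 ?Yx1x2 ?Xx1u1 ?Yx1u1 ?Xx1u2 ?Yx1u2 ?Xx2x1 ?Yx2x1 ?Xx2x2 ?Yx2x2 ?Xx2u1 ?Yx2u1 ?Xx2u2 ?Yx2u2 ?Xu1x1 ?Yu1x1 ?Xu1x2 ?Yu1x2 ?Xu1u1 ?Yu1u1 ?Xu1u2 ?Yu1u2 ?Xu2x1 ?Yu2x1 ?Xu2x2 ?Yu2x2 ?Xu2u1 ?Yu2u1 ?Xu2u2 ?Yu2u2 /= ?orbT.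
  have h2 : connect ee' x1 x2 = false.
    apply/negbTE/negP => hh.
    have : [pred v | connect e0 x1 v || connect e0 (p x2) v] x2.
      apply: (@connect_closedP _ ee' _ x1 x2); last exact: hh; last by rewrite /= connect0.
      move=> v w /= Kv /ee'_split /orP[h0|/andP[vs /eqP->]].
        by case/orP: Kv => k1; rewrite (Tr _ _ _ k1 (@connect1 _ e0 _ _ h0)) ?orbT.
      move: Kv; apply/implyP; move: vs; rewrite Es.
      apply: (all8 (P := [pred v | (connect e0 x1 v || connect e0 (p x2) v) ==>
                               (connect e0 x1 (q v) || connect e0 (p x2) (q v))]));
      by rewrite /= ?connect0 ?pp1 ?pp2 ?pp3 ?pp4 ?qx1 ?qx2 ?qx3 ?qx4 ?qu1 ?qu2 ?qu3 ?qu4 ?c1 ?c2 ?o1 ?o2 ?Fnx ?Fny ?Fny' ?Fxu ?Fxu' ?Fa ?Fb ?Fa' ?Fb' ?Xx1x1 ?Yx1x1 ?Xx1x2 ?Yx1x2 ?Xx1u1 ?Yx1u1 ?Xx1u2 ?Yx1u2 ?Xx2x1 ?Yx2x1 ?Xx2x2 ?Yx2x2 ?Xx2u1 ?Yx2u1 ?Xx2u2 ?Yx2u2 ?Xu1x1 ?Yu1x1 ?Xu1x2 ?Yu1x2 ?Xu1u1 ?Yu1u1 ?Xu1u2 ?Yu1u2 ?Xu2x1 ?Yu2x1 ?Xu2x2 ?Yu2x2 ?Xu2u1 ?Yu2u1 ?Xu2u2 ?Yu2u2 /= ?orbT ?connect0 ?orbT.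
    by rewrite /= ?connect0 ?pp1 ?pp2 ?pp3 ?pp4 ?qx1 ?qx2 ?qx3 ?qx4 ?qu1 ?qu2 ?qu3 ?qu4 ?c1 ?c2 ?o1 ?o2 ?Fnx ?Fny ?Fny' ?Fxu ?Fxu' ?Fa ?Fb ?Fa' ?Fb' ?Xx1x1 ?Yx1x1 ?Xx1x2 ?Yx1x2 ?Xx1u1 ?Yx1u1 ?Xx1u2 ?Yx1u2 ?Xx2x1 ?Yx2x1 ?Xx2x2 ?Yx2x2 ?Xx2u1 ?Yx2u1 ?Xx2u2 ?Yx2u2 ?Xu1x1 ?Yu1x1 ?Xu1x2 ?Yu1x2 ?Xu1u1 ?Yu1u1 ?Xu1u2 ?Yu1u2 ?Xu2x1 ?Yu2x1 ?Xu2x2 ?Yu2x2 ?Xu2u1 ?Yu2u1 ?Xu2u2 ?Yu2u2 /= ?orbT.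
  by rewrite h1 h2.
- have h1 : connect ee x1 x2.
    apply: (connect_trans (@connect1 _ ee x1 (p x1) _)); first by rewrite /= N1 eqxx orbT.
    apply: (connect_trans (c0_ee o1)).
    apply: (connect_trans (@connect1 _ ee (p u2) u2 _)); first by rewrite /= pN4 pp4 eqxx orbT.
    exact: c0_ee (S _ _ c2).
  have h2 : connect ee' x1 x2.
    apply: (connect_trans (@connect1 _ ee' x1 (p x2) _)); first by rewrite /= N1 qx1 eqxx orbT.
    apply: (connect_trans (c0_ee' o2)).
    apply: (connect_trans (@connect1 _ ee' (p u1) u2 _)); first by rewrite /= pN3 qu3 eqxx orbT.
    exact: c0_ee' (S _ _ c2).
  by rewrite h1 h2.
Qed.

Lemma k2 x1 x2 z1 z2 : s = [:: x1; x2; z1; z2; p x1; p x2; p z1; p z2] -> uniq s ->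
  x1 \in N -> x2 \in N -> z1 \in N -> z2 \in N ->
  x1 \in In -> x2 \in In -> z1 \in In -> z2 \in In ->
  p x1 \notin In -> p x2 \notin In -> p z1 \notin In -> p z2 \notin In ->
  q x1 = p x2 -> q x2 = p x1 -> q (p x1) = x2 -> q (p x2) = x1 ->
  q z1 = p z2 -> q z2 = p z1 -> q (p z1) = z2 -> q (p z2) = z1 ->
  n_comp ee N = n_comp ee' N.
Proof.
move=> Es us N1 N2 N3 N4 I1 I2 I3 I4 O1 O2 O3 O4 qx1 qx2 qx3 qx4 qz1 qz2 qz3 qz4.
have [pN1 _ _] := Hp N1; have [pN2 _ _] := Hp N2.
have [pN3 _ _] := Hp N3; have [pN4 _ _] := Hp N4.
have S u v : connect e0 u v -> connect e0 v u by rewrite e0_csym.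
have Tr u v w : connect e0 u v -> connect e0 v w -> connect e0 u w.
  exact: connect_trans.
have Xx1x1 := cross0 I1 O1.
have Yx1x1 := cross0' I1 O1.
have Xx1x2 := cross0 I1 O2.
have Yx1x2 := cross0' I1 O2.
have Xx1z1 := cross0 I1 O3.
have Yx1z1 := cross0' I1 O3.
have Xx1z2 := cross0 I1 O4.
have Yx1z2 := cross0' I1 O4.
have Xx2x1 := cross0 I2 O1.
have Yx2x1 := cross0' I2 O1.
have Xx2x2 := cross0 I2 O2.
have Yx2x2 := cross0' I2 O2.
have Xx2z1 := cross0 I2 O3.
have Yx2z1 := cross0' I2 O3.
have Xx2z2 := cross0 I2 O4.
have Yx2z2 := cross0' I2 O4.
have Xz1x1 := cross0 I3 O1.
have Yz1x1 := cross0' I3 O1.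
have Xz1x2 := cross0 I3 O2.
have Yz1x2 := cross0' I3 O2.
have Xz1z1 := cross0 I3 O3.
have Yz1z1 := cross0' I3 O3.
have Xz1z2 := cross0 I3 O4.
have Yz1z2 := cross0' I3 O4.
have Xz2x1 := cross0 I4 O1.
have Yz2x1 := cross0' I4 O1.
have Xz2x2 := cross0 I4 O2.
have Yz2x2 := cross0' I4 O2.
have Xz2z1 := cross0 I4 O3.
have Yz2z1 := cross0' I4 O3.
have Xz2z2 := cross0 I4 O4.
have Yz2z2 := cross0' I4 O4.
have Good : connect e0 x1 x2 || connect e0 (p x1) (p x2) ->
            connect e0 z1 z2 || connect e0 (p z1) (p z2) -> n_comp ee N = n_comp ee' N.
  move=> g1 g2; apply: eq_n_comp; apply: conn_eq => x; rewrite Es => xs.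
  have A1 := pair_ok N1 N2 g1 qx1 qx2 qx3 qx4.
  have A2 := pair_ok N3 N4 g2 qz1 qz2 qz3 qz4.
  suff: [pred x | connect ee' x (p x) && connect ee x (q x)] x by case/andP.
  move: xs; apply: all8 => /=; apply/andP;
    [apply: A1|apply: A1|apply: A2|apply: A2|apply: A1|apply: A1|apply: A2|apply: A2];
    by rewrite !inE eqxx ?orbT.
case cx: (connect e0 x1 x2).
  apply: Good; first by rewrite cx.
  have e12 : connect e0 z1 x2 = connect e0 z1 x1.
    by apply/idP/idP => h; [apply: Tr h (S _ _ cx) | apply: Tr h cx].
  move: (parity us N3); rewrite Es /= connect0 e12 ?Xx1x1 ?Yx1x1 ?Xx1x2 ?Yx1x2 ?Xx1z1 ?Yx1z1 ?Xx1z2 ?Yx1z2 ?Xx2x1 ?Yx2x1 ?Xx2x2 ?Yx2x2 ?Xx2z1 ?Yx2z1 ?Xx2z2 ?Yx2z2 ?Xz1x1 ?Yz1x1 ?Xz1x2 ?Yz1x2 ?Xz1z1 ?Yz1z1 ?Xz1z2 ?Yz1z2 ?Xz2x1 ?Yz2x1 ?Xz2x2 ?Yz2x2 ?Xz2z1 ?Yz2z1 ?Xz2z2 ?Yz2z2.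
  by case: (connect e0 z1 x1); case: (connect e0 z1 z2).
case cy: (connect e0 (p x1) (p x2)).
  apply: Good; first by rewrite cy orbT.
  have e12 : connect e0 (p z1) (p x2) = connect e0 (p z1) (p x1).
    by apply/idP/idP => h; [apply: Tr h (S _ _ cy) | apply: Tr h cy].
  move: (parity us pN3); rewrite Es /= connect0 e12 ?Xx1x1 ?Yx1x1 ?Xx1x2 ?Yx1x2 ?Xx1z1 ?Yx1z1 ?Xx1z2 ?Yx1z2 ?Xx2x1 ?Yx2x1 ?Xx2x2 ?Yx2x2 ?Xx2z1 ?Yx2z1 ?Xx2z2 ?Yx2z2 ?Xz1x1 ?Yz1x1 ?Xz1x2 ?Yz1x2 ?Xz1z1 ?Yz1z1 ?Xz1z2 ?Yz1z2 ?Xz2x1 ?Yz2x1 ?Xz2x2 ?Yz2x2 ?Xz2z1 ?Yz2z1 ?Xz2z2 ?Yz2z2.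
  by case: (connect e0 (p z1) (p x1)); case: (connect e0 (p z1) (p z2)); rewrite ?orbT.
have cx' : connect e0 x2 x1 = false by rewrite e0_csym.
have cy' : connect e0 (p x2) (p x1) = false by rewrite e0_csym.
have hx1 : connect e0 x1 z1 = ~~ connect e0 x1 z2.
  move: (parity us N1); rewrite Es /= connect0 cx ?Xx1x1 ?Yx1x1 ?Xx1x2 ?Yx1x2 ?Xx1z1 ?Yx1z1 ?Xx1z2 ?Yx1z2 ?Xx2x1 ?Yx2x1 ?Xx2x2 ?Yx2x2 ?Xx2z1 ?Yx2z1 ?Xx2z2 ?Yx2z2 ?Xz1x1 ?Yz1x1 ?Xz1x2 ?Yz1x2 ?Xz1z1 ?Yz1z1 ?Xz1z2 ?Yz1z2 ?Xz2x1 ?Yz2x1 ?Xz2x2 ?Yz2x2 ?Xz2z1 ?Yz2z1 ?Xz2z2 ?Yz2z2.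
  by case: (connect e0 x1 z1); case: (connect e0 x1 z2).
have hx2 : connect e0 x2 z1 = ~~ connect e0 x2 z2.
  move: (parity us N2); rewrite Es /= connect0 cx' ?Xx1x1 ?Yx1x1 ?Xx1x2 ?Yx1x2 ?Xx1z1 ?Yx1z1 ?Xx1z2 ?Yx1z2 ?Xx2x1 ?Yx2x1 ?Xx2x2 ?Yx2x2 ?Xx2z1 ?Yx2z1 ?Xx2z2 ?Yx2z2 ?Xz1x1 ?Yz1x1 ?Xz1x2 ?Yz1x2 ?Xz1z1 ?Yz1z1 ?Xz1z2 ?Yz1z2 ?Xz2x1 ?Yz2x1 ?Xz2x2 ?Yz2x2 ?Xz2z1 ?Yz2z1 ?Xz2z2 ?Yz2z2.
  by case: (connect e0 x2 z1); case: (connect e0 x2 z2).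
have hy1 : connect e0 (p x1) (p z1) = ~~ connect e0 (p x1) (p z2).
  move: (parity us pN1); rewrite Es /= connect0 cy ?Xx1x1 ?Yx1x1 ?Xx1x2 ?Yx1x2 ?Xx1z1 ?Yx1z1 ?Xx1z2 ?Yx1z2 ?Xx2x1 ?Yx2x1 ?Xx2x2 ?Yx2x2 ?Xx2z1 ?Yx2z1 ?Xx2z2 ?Yx2z2 ?Xz1x1 ?Yz1x1 ?Xz1x2 ?Yz1x2 ?Xz1z1 ?Yz1z1 ?Xz1z2 ?Yz1z2 ?Xz2x1 ?Yz2x1 ?Xz2x2 ?Yz2x2 ?Xz2z1 ?Yz2z1 ?Xz2z2 ?Yz2z2.
  by case: (connect e0 (p x1) (p z1)); case: (connect e0 (p x1) (p z2)).
have hy2 : connect e0 (p x2) (p z1) = ~~ connect e0 (p x2) (p z2).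
  move: (parity us pN2); rewrite Es /= connect0 cy' ?Xx1x1 ?Yx1x1 ?Xx1x2 ?Yx1x2 ?Xx1z1 ?Yx1z1 ?Xx1z2 ?Yx1z2 ?Xx2x1 ?Yx2x1 ?Xx2x2 ?Yx2x2 ?Xx2z1 ?Yx2z1 ?Xx2z2 ?Yx2z2 ?Xz1x1 ?Yz1x1 ?Xz1x2 ?Yz1x2 ?Xz1z1 ?Yz1z1 ?Xz1z2 ?Yz1z2 ?Xz2x1 ?Yz2x1 ?Xz2x2 ?Yz2x2 ?Xz2z1 ?Yz2z1 ?Xz2z2 ?Yz2z2.
  by case: (connect e0 (p x2) (p z1)); case: (connect e0 (p x2) (p z2)).
have nx : ~~ connect e0 x1 x2 by rewrite cx.
have ny : ~~ connect e0 (p x1) (p x2) by rewrite cy.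
have hout : (connect e0 (p x1) (p z1) && connect e0 (p x2) (p z2)) ||
            (connect e0 (p x1) (p z2) && connect e0 (p x2) (p z1)).
  case c11: (connect e0 (p x1) (p z1)) => /=.
    case c22: (connect e0 (p x2) (p z2)) => //.
    move: c22; rewrite -[connect e0 (p x2) (p z2)]negbK -hy2 => /negbFE c21.
    by move: cy; rewrite (Tr _ _ _ c11 (S _ _ c21)).
  have c12 : connect e0 (p x1) (p z2) by rewrite -[connect e0 (p x1) (p z2)]negbK -hy1 c11.
  rewrite c12 /=; case c21: (connect e0 (p x2) (p z1)) => //.
  move: c21; rewrite hy2 => /negbFE c22.
  by move: cy; rewrite (Tr _ _ _ c12 (S _ _ c22)).
case c11: (connect e0 x1 z1).
  have c22 : connect e0 x2 z2.
    rewrite -[connect e0 x2 z2]negbK -hx2; apply/negP => c21.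
    by move: cx; rewrite (Tr _ _ _ c11 (S _ _ c21)).
  by apply: (hard (x1:=x1) (x2:=x2) (u1:=z1) (u2:=z2)) => //; rewrite Es.
have c12 : connect e0 x1 z2 by rewrite -[connect e0 x1 z2]negbK -hx1 c11.
have c21 : connect e0 x2 z1.
  rewrite hx2; apply/negP => c22.
  by move: cx; rewrite (Tr _ _ _ c12 (S _ _ c22)).
apply: (hard (x1:=x1) (x2:=x2) (u1:=z2) (u2:=z1)) => //.
- by move=> t; rewrite Es !inE; case: (t == z1); case: (t == z2); case: (t == p z1); case: (t == p z2); rewrite /= ?orbT.
- by rewrite orbC.
Qed.

End Abstract.

Section Local.
Variables (D : finType) (alpha sigma : {perm D}) (n : nat) (ord : 'I_n -> D).
Local Notation md := (mdart alpha ord).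
Hypothesis Haa : forall d, alpha (alpha d) = d.
Hypothesis Ha1 : forall d, alpha d != d.
Hypothesis Hs1 : forall d, sigma d != d.
Hypothesis Hs3 : forall d, sigma (sigma (sigma d)) = d.
Hypothesis L1 : forall d, md d -> ~~ md (sigma d) && ~~ md (sigma (sigma d)).
Hypothesis L2 : forall d, ~~ md d -> ~~ md (sigma d) -> md (sigma (sigma d)).

Lemma sinv d : (sigma^-1)%g d = sigma (sigma d).
Proof. by rewrite -{1}[d]Hs3 permK. Qed.

Lemma mdA d : md (alpha d) = md d.
Proof.
apply: eq_existsb => i.
rewrite (inj_eq (@perm_inj _ alpha)) -{1}[ord i]Haa (inj_eq (@perm_inj _ alpha)).
by rewrite orbC.
Qed.

Lemma s2n d : sigma (sigma d) != d.
Proof. by apply/eqP => h; move: (Hs1 d); rewrite -{1}h Hs3 eqxx. Qed.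

Lemma s12 d : sigma (sigma d) != sigma d.
Proof. exact: Hs1. Qed.

Lemma matd_md x : ~~ md x ->
  md (matd alpha sigma ord x) /\
  (x = sigma (matd alpha sigma ord x) \/ x = sigma (sigma (matd alpha sigma ord x))).
Proof.
move=> nx; rewrite /matd; case h: (md (sigma x)).
  by split=> //; right; rewrite Hs3.
rewrite sinv; split; first by apply: L2 => //; rewrite h.
by left; rewrite Hs3.
Qed.

Lemma matd_of m : md m ->
  matd alpha sigma ord (sigma m) = m /\ matd alpha sigma ord (sigma (sigma m)) = m.
Proof.
move=> hm; have /andP[n1 n2] := L1 hm; rewrite /matd (negbTE n2) permK.
by split=> //; rewrite Hs3 hm.
Qed.

Lemma sbitA r m : sbit alpha ord r (alpha m) = sbit alpha ord r m.
Proof.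
apply: eq_existsb => i; congr (_ && _).
rewrite (inj_eq (@perm_inj _ alpha)) -{1}[ord i]Haa (inj_eq (@perm_inj _ alpha)).
by rewrite orbC.
Qed.

Lemma partnerE r x : partner alpha sigma ord r x =
  let m := matd alpha sigma ord x in
  if (x == sigma m) != sbit alpha ord r m then sigma (sigma (alpha m))
  else sigma (alpha m).
Proof. by []. Qed.

Lemma partner_in r x : ~~ md x ->
  let m := matd alpha sigma ord x in
  partner alpha sigma ord r x = sigma (alpha m) \/
  partner alpha sigma ord r x = sigma (sigma (alpha m)).
Proof. by move=> _ /=; rewrite partnerE /=; case: ifP => _; [right|left]. Qed.

Lemma partner_props r x : ~~ md x ->
  [/\ ~~ md (partner alpha sigma ord r x),
      matd alpha sigma ord (partner alpha sigma ord r x) = alpha (matd alpha sigma ord x),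
      partner alpha sigma ord r (partner alpha sigma ord r x) = x &
      partner alpha sigma ord r x != x].
Proof.
move=> nx; have [hm xm] := matd_md nx.
set m := matd alpha sigma ord x in hm xm *.
have hm' : md (alpha m) by rewrite mdA.
have [e1 e2] := matd_of hm'.
have /andP[n1 n2] := L1 hm'.
have Hpx : partner alpha sigma ord r x = sigma (alpha m) \/
           partner alpha sigma ord r x = sigma (sigma (alpha m)) by apply: partner_in.
have mp : matd alpha sigma ord (partner alpha sigma ord r x) = alpha m.
  by case: Hpx => ->.
split => //.
- by case: Hpx => ->.
- rewrite [partner _ _ _ _ (partner _ _ _ _ x)]partnerE /= mp Haa sbitA.
  rewrite partnerE /= -/m.
  have ne : (sigma (sigma m) == sigma m) = false by apply/negbTE; apply: Hs1.
  have ne' : (sigma (sigma (alpha m)) == sigma (alpha m)) = false by apply/negbTE; apply: Hs1.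
  case: xm => ->; rewrite ?eqxx ?ne; case: (sbit alpha ord r m) => /=;
    rewrite ?eqxx ?ne' //.
- apply/eqP => h.
  have : matd alpha sigma ord (partner alpha sigma ord r x) = m by rewrite h.
  by rewrite mp; apply/eqP; apply: Ha1.
Qed.

End Local.

Lemma X2_lem (T : finType) (X : {set T}) m d : #|X| <= 2 -> m \in X -> d \in X :\ m ->
  forall y, y \in X -> y = m \/ y = d.
Proof.
move=> hX mX dX y yX; case: (eqVneq y m) => [->|ym]; first by left.
case: (eqVneq y d) => [->|yd]; first by right.
have yX' : y \in X :\ m by rewrite !inE ym.
have : #|[set y; d]| <= #|X :\ m|.
  by apply: subset_leq_card; apply/subsetP => z /set2P[]->.
rewrite cards2 yd /=.
have := cardsD1 m X; rewrite mX => e; move: hX; rewrite e.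
by case: #|X :\ m| => [|[|k]].
Qed.

Lemma X1_lem (T : finType) (X : {set T}) m : X :\ m = set0 -> forall y, y \in X -> y = m.
Proof.
move=> e y yX; apply/eqP; apply/negPn/negP => ym.
have h : y \in X :\ m by rewrite !inE ym yX.
by rewrite e inE in h.
Qed.

Lemma hsp_gen (T : finType) (N : {pred T}) (p : T -> T) (s : seq T) :
  (forall x, x \in N -> p (p x) = x) -> {subset s <= N} ->
  (forall x, x \in s -> p x \in s) ->
  forall x, x \in N -> (p x \in s) = (x \in s).
Proof.
move=> pp sN cl x Nx; apply/idP/idP; last exact: cl.
by move/cl; rewrite pp.
Qed.

Section Flip.
Variables (D : finType) (alpha sigma sigma' : {perm D}) (n : nat) (ord : 'I_n -> D)
  (S : {set D}).
Local Notation md := (mdart alpha ord).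
Hypothesis Haa : forall d, alpha (alpha d) = d.
Hypothesis Ha1 : forall d, alpha d != d.
Hypothesis Hs1 : forall d, sigma d != d.
Hypothesis Hs3 : forall d, sigma (sigma (sigma d)) = d.
Hypothesis L1 : forall d, md d -> ~~ md (sigma d) && ~~ md (sigma (sigma d)).
Hypothesis L2 : forall d, ~~ md d -> ~~ md (sigma d) -> md (sigma (sigma d)).
Hypothesis HS : forall d, (sigma d \in S) = (d \in S).
Hypothesis Hsg : forall d, sigma' d = if d \in S then (sigma^-1)%g d else sigma d.

Lemma inS2 d : (sigma (sigma d) \in S) = (d \in S).
Proof. by rewrite !HS. Qed.

Lemma sp d : sigma' d = if d \in S then sigma (sigma d) else sigma d.
Proof. by rewrite Hsg (sinv Hs3). Qed.

Lemma sp2 d : sigma' (sigma' d) = if d \in S then sigma d else sigma (sigma d).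
Proof.
by rewrite (sp d); case h: (d \in S); rewrite sp ?inS2 ?HS h // Hs3.
Qed.

Lemma sp3 d : sigma' (sigma' (sigma' d)) = d.
Proof.
by rewrite (sp d); case h: (d \in S); rewrite sp2 ?inS2 ?HS h ?Hs3.
Qed.

Lemma sp1 d : sigma' d != d.
Proof. by rewrite sp; case: ifP => _; [apply: (s2n Hs1 Hs3)|apply: Hs1]. Qed.

Lemma md3 d : ~~ md d -> ~~ md (sigma (sigma d)) -> md (sigma d).
Proof.
move=> h1 h2; case h3: (md (sigma d)) => //.
by move: (L2 h1 (negbT h3)); rewrite (negbTE h2).
Qed.

Lemma L1' d : md d -> ~~ md (sigma' d) && ~~ md (sigma' (sigma' d)).
Proof.
move=> h; rewrite sp2 sp; have /andP[n1 n2] := L1 h.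
by case: ifP => _; rewrite ?n1 ?n2.
Qed.

Lemma L2' d : ~~ md d -> ~~ md (sigma' d) -> md (sigma' (sigma' d)).
Proof.
move=> h1; rewrite sp2 sp; case: ifP => _ h2; last exact: L2.
exact: md3.
Qed.

Lemma matd_eq x : ~~ md x -> matd alpha sigma' ord x = matd alpha sigma ord x.
Proof.
move=> nx; rewrite /matd (sinv sp3) (sinv Hs3) sp2 sp.
case xS: (x \in S) => //=.
case h1: (md (sigma x)).
  by have /andP[n1 _] := L1 h1; rewrite (negbTE n1).
by rewrite (L2 nx (negbT h1)).
Qed.

Lemma partner_flip r x : ~~ md x ->
  let m := matd alpha sigma ord x in
  partner alpha sigma' ord r x =
   if (m \in S) != (alpha m \in S)
   then (if (x == sigma m) != sbit alpha ord r m then sigma (alpha m)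
         else sigma (sigma (alpha m)))
   else partner alpha sigma ord r x.
Proof.
move=> nx /=; rewrite (partnerE alpha sigma') (partnerE alpha sigma) /= matd_eq //.
have [hm xm] := matd_md Hs3 L2 nx.
set m := matd alpha sigma ord x in hm xm *.
rewrite sp2 !sp.
have ne : (sigma (sigma m) == sigma m) = false by apply/negbTE; apply: Hs1.
have ne' : (sigma m == sigma (sigma m)) = false by rewrite eq_sym ne.
case: xm => ->; case: (m \in S); case: (alpha m \in S);
  case: (sbit alpha ord r m) => /=; rewrite ?eqxx ?ne ?ne' //.
Qed.


Hypothesis HX : #|[set d in S | alpha d \notin S]| <= 2.

Lemma HP r x : x \in [pred d | ~~ md d] ->
  [/\ partner alpha sigma ord r x \in [pred d | ~~ md d],
      partner alpha sigma ord r (partner alpha sigma ord r x) = x &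
      partner alpha sigma ord r x != x].
Proof.
rewrite !inE => nx; have [a1 _ a3 a4] := partner_props Haa Ha1 Hs1 Hs3 L1 L2 r nx.
by split.
Qed.

Lemma HQ r x : x \in [pred d | ~~ md d] ->
  partner alpha sigma' ord r x \in [pred d | ~~ md d] /\
  partner alpha sigma' ord r (partner alpha sigma' ord r x) = x.
Proof.
rewrite !inE => nx; have [a1 _ a3 a4] := partner_props Haa Ha1 sp1 sp3 L1' L2' r nx.
by split.
Qed.

Lemma restr (sg : {perm D}) r :
  (forall x, ~~ md x -> ~~ md (partner alpha sg ord r x)) ->
  n_comp (clink alpha sg ord r) [pred d | ~~ md d] =
  n_comp (ee [pred d | ~~ md d] alpha (partner alpha sg ord r)) [pred d | ~~ md d].
Proof.
move=> Hpr; apply: n_comp_restrict => x y Nx.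
  by rewrite /clink /= inE; move: Nx => /= ->.
rewrite /clink /= => /orP[/eqP->|/eqP->]; last exact: Hpr.
by rewrite mdA.
Qed.


Local Notation P r := (partner alpha sigma ord r).
Local Notation Q r := (partner alpha sigma' ord r).
Local Notation X := [set d in S | alpha d \notin S].

Lemma Ha_gen : (forall y, y \in X -> md y) ->
  forall x, x \in [pred d | ~~ md d] ->
  [/\ alpha x \in [pred d | ~~ md d], alpha (alpha x) = x, alpha x != x &
      (alpha x \in S) = (x \in S)].
Proof.
move=> HXm x; rewrite !inE => nx; split; rewrite ?inE ?(mdA ord Haa) ?Haa ?Ha1 //.
case xS: (x \in S); case aS: (alpha x \in S) => //.
  have : x \in X by rewrite inE xS aS.
  by move/HXm; rewrite (negbTE nx).
have : alpha x \in X by rewrite inE aS Haa xS.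
by move/HXm; rewrite (mdA ord Haa) (negbTE nx).
Qed.

Lemma cross_facts r m : md m -> m \in S -> alpha m \notin S ->
  [/\ [/\ ~~ md (sigma m), ~~ md (sigma (sigma m)), ~~ md (P r (sigma m))
        & ~~ md (P r (sigma (sigma m)))],
      [/\ sigma m \in S, sigma (sigma m) \in S, P r (sigma m) \notin S
        & P r (sigma (sigma m)) \notin S],
      [/\ matd alpha sigma ord (sigma m) = m, matd alpha sigma ord (sigma (sigma m)) = m,
          matd alpha sigma ord (P r (sigma m)) = alpha m
        & matd alpha sigma ord (P r (sigma (sigma m))) = alpha m] &
      [/\ Q r (sigma m) = P r (sigma (sigma m)), Q r (sigma (sigma m)) = P r (sigma m),
          Q r (P r (sigma m)) = sigma (sigma m) & Q r (P r (sigma (sigma m))) = sigma m]].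
Proof.
move=> hm mS amS.
have /andP[n1 n2] := L1 hm.
have [e1 e2] := matd_of Hs3 L1 hm.
have [p1 p2 p3 p4] := partner_props Haa Ha1 Hs1 Hs3 L1 L2 r n1.
have [q1 q2 q3 q4] := partner_props Haa Ha1 Hs1 Hs3 L1 L2 r n2.
rewrite e1 in p2; rewrite e2 in q2.
have in1 : P r (sigma m) = sigma (alpha m) \/ P r (sigma m) = sigma (sigma (alpha m)).
  by have := partner_in sigma r n1; rewrite /= e1.
have in2 : P r (sigma (sigma m)) = sigma (alpha m) \/
           P r (sigma (sigma m)) = sigma (sigma (alpha m)).
  by have := partner_in sigma r n2; rewrite /= e2.
have ne : (sigma (sigma m) == sigma m) = false by apply/negbTE; apply: Hs1.
have ne' : (sigma (sigma (alpha m)) == sigma (alpha m)) = false by apply/negbTE; apply: Hs1.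
have crm : (m \in S) != (alpha m \in S) by rewrite mS (negbTE amS).
have cram : (alpha m \in S) != (alpha (alpha m) \in S) by rewrite Haa mS (negbTE amS).
split.
- by split.
- split; rewrite ?HS ?inS2 //.
    by case: in1 => ->; rewrite ?HS ?inS2.
  by case: in2 => ->; rewrite ?HS ?inS2.
- by split.
- split.
  + rewrite (partner_flip r n1) /= e1 crm (partnerE alpha sigma ord) /= e2 eqxx ne.
    by case: (sbit alpha ord r m).
  + rewrite (partner_flip r n2) /= e2 crm (partnerE alpha sigma ord) /= e1 eqxx ne.
    by case: (sbit alpha ord r m).
  + rewrite (partner_flip r p1) /= p2 cram Haa (sbitA ord Haa).
    rewrite (partnerE alpha sigma ord r (sigma m)).
    by rewrite /= e1 eqxx; case: (sbit alpha ord r m); rewrite /= ?eqxx ?ne'.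
  + rewrite (partner_flip r q1) /= q2 cram Haa (sbitA ord Haa).
    rewrite (partnerE alpha sigma ord r (sigma (sigma m))).
    by rewrite /= e2 ne; case: (sbit alpha ord r m); rewrite /= ?eqxx ?ne'.
Qed.


Local Notation N := [pred d | ~~ md d].

Lemma neq_matd u v : matd alpha sigma ord u != matd alpha sigma ord v -> u != v.
Proof. by apply: contra => /eqP->. Qed.

Lemma Hnc_gen r (s cm : seq D) :
  (forall y, y \in X -> y \in cm) ->
  (forall c, c \in cm -> sigma c \in s /\ sigma (sigma c) \in s) ->
  (forall x, x \in N -> (P r x \in s) = (x \in s)) ->
  forall x, x \in N -> x \notin s -> (P r x \in [pred d | d \in S]) = (x \in [pred d | d \in S]) /\
                                   Q r x = P r x.
Proof.
move=> HXc Hcs Hsp x Nx xs; have nx : ~~ md x by rewrite inE in Nx.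
have [hm xm] := matd_md Hs3 L2 nx.
have Hin := partner_in sigma r nx; rewrite /= in Hin.
move: hm xm Hin; set m0 := matd alpha sigma ord x => hm xm Hin.
rewrite !inE.
case crm: ((m0 \in S) != (alpha m0 \in S)).
  exfalso; case m0S: (m0 \in S); rewrite m0S in crm.
    have : m0 \in X by rewrite inE m0S /=; move: crm; case: (alpha m0 \in S).
    move/HXc/Hcs => [h1 h2]; case: xm => e; move: xs; rewrite e ?h1 ?h2 //.
  have : alpha m0 \in X by rewrite inE Haa m0S andbT; move: crm; case: (alpha m0 \in S).
  move/HXc/Hcs => [h1 h2].
  have : P r x \in s by case: Hin => ->.
  by rewrite Hsp // (negbTE xs).
have e : (alpha m0 \in S) = (m0 \in S) by apply/eqP; rewrite eq_sym; apply/negPn; rewrite crm.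
have ex : (x \in S) = (m0 \in S) by case: xm => ->; rewrite ?HS ?inS2.
split.
  by case: Hin => ->; rewrite ?HS ?inS2 e ex.
by rewrite (partner_flip r nx) /= -/m0 crm.
Qed.

Lemma no_mixed m d : md m -> m \in X -> d \in X -> ~~ md d ->
  (forall y, y \in X -> y = m \/ y = d) -> False.
Proof.
move=> hm mX dX hd HX2.
have dS : d \in S by move: dX; rewrite inE => /andP[].
pose A := [set x in S | ~~ md x].
have dA : d \in A by rewrite inE dS hd.
pose nu x := if md (sigma x) then sigma (sigma x) else sigma x.
have eA : ~~ odd #|A|.
  apply: (@even_inv _ A nu) => x; rewrite inE => /andP[xS nx]; rewrite /nu.
  case h: (md (sigma x)).
    have /andP[n1 n2] := L1 h; rewrite Hs3 in n2.
    by rewrite Hs3 (negbTE n2) inE inS2 xS n1; split=> //; apply: (s2n Hs1 Hs3).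
  have h2 := L2 nx (negbT h).
  by rewrite h2 inE HS xS h Hs3; split=> //; apply: Hs1.
have eA' : ~~ odd #|A :\ d|.
  apply: (@even_inv _ (A :\ d) alpha) => y; rewrite !inE => /and3P[yd yS ny].
  have ay : alpha y \in S.
    case aS: (alpha y \in S) => //.
    have : y \in X by rewrite inE yS aS.
    case/HX2 => e; first by rewrite e hm in ny.
    by rewrite e eqxx in yd.
  split; [|by rewrite Haa|by apply: Ha1].
  rewrite ay (mdA ord Haa) ny !andbT.
  apply/eqP => e; move: dX; rewrite -e inE Haa yS.
  by rewrite andbF.
move: eA; rewrite (cardsD1 d A) dA /=.
by rewrite /= eA'.
Qed.

Lemma circ_eq r :
  n_comp (clink alpha sigma' ord r) N = n_comp (clink alpha sigma ord r) N.
Proof.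
have HPr := HP r; have HQr := HQ r.
have R1 : n_comp (clink alpha sigma ord r) N = n_comp (ee N alpha (P r)) N.
  by apply: restr => x nx; have [] := HPr x; rewrite ?inE.
have R2 : n_comp (clink alpha sigma' ord r) N = n_comp (ee N alpha (Q r)) N.
  by apply: restr => x nx; have [] := HQr x; rewrite ?inE.
case: (boolP [exists m in X, md m]) => [/existsP[m /andP[mX hm]]|noX]; last first.
  apply: n_comp_restrict => x y Nx; last first.
    rewrite /clink /= => /orP[/eqP->|/eqP->]; last by have [] := HQr x Nx.
    by move: Nx; rewrite !inE (mdA ord Haa).
  have nx : ~~ md x by move: Nx; rewrite inE.
  rewrite /clink; congr (_ || (y == _)); rewrite (partner_flip r nx) /=.
  have [hm0 _] := matd_md Hs3 L2 nx.
  move: hm0; set m0 := matd alpha sigma ord x => hm0.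
  case c: ((m0 \in S) != (alpha m0 \in S)) => //.
  exfalso; move/negP: noX; apply; apply/existsP.
  case mS: (m0 \in S); rewrite mS in c.
    by exists m0; rewrite inE mS hm0 andbT /=; move: c; case: (alpha m0 \in S).
  exists (alpha m0); rewrite inE Haa mS (mdA ord Haa) hm0 andbT /=.
  by move: c; case: (alpha m0 \in S).
move: (mX); rewrite inE => /andP[mS amS].
have [[n1 n2 n3 n4] [s1 s2 s3 s4] [e1 e2 e3 e4] [f1 f2 f3 f4]] :=
  cross_facts r hm mS amS.
have [_ pp1 _] := HPr (sigma m) n1.
have [_ pp2 _] := HPr (sigma (sigma m)) n2.
have d12 : sigma m != sigma (sigma m) by rewrite eq_sym; apply: Hs1.
have d34 : P r (sigma m) != P r (sigma (sigma m)).
  by move: d12; apply: contra => /eqP e; apply/eqP; rewrite -[LHS]pp1 e pp2.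
have ma : m != alpha m by rewrite eq_sym; apply: Ha1.
have am : alpha m != m by apply: Ha1.
rewrite R1 R2; symmetry.
case: (set_0Vmem (X :\ m)) => [X0 | [d dX]].
  have HXs := X1_lem X0.
  have Ha' := Ha_gen (fun y yX => etrans (congr1 md (HXs y yX)) hm).
  pose s := [:: sigma m; sigma (sigma m); P r (sigma m); P r (sigma (sigma m))].
  have Hsp' : forall x, x \in N -> (P r x \in s) = (x \in s).
    apply: hsp_gen.
    - by move=> x /HPr[].
    - by move=> x; rewrite !inE => /or4P[]/eqP->.
    - by move=> x; rewrite !inE => /or4P[]/eqP->; rewrite ?pp1 ?pp2 eqxx ?orbT.
  have HXc : forall y, y \in X -> y \in [:: m] by move=> y yX; rewrite inE (HXs y yX).
  have Hcs : forall c, c \in [:: m] -> sigma c \in s /\ sigma (sigma c) \in s.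
    by move=> c; rewrite inE => /eqP->; split; rewrite /s ?inE eqxx ?orbT.
  have Hnc' := Hnc_gen HXc Hcs Hsp'.
  have us : uniq s.
    rewrite /s /= !inE !negb_or; repeat (apply/andP; split); try done;
    apply: neq_matd; rewrite ?e1 ?e2 ?e3 ?e4 //.
  exact: (k1 Ha' HPr Hsp' Hnc' erefl us n1 n2 s1 s2 s3 s4 f1 f2 f3 f4).
have HX2 := X2_lem HX mX dX.
move: (dX); rewrite in_setD1 => /andP[dm dX'].
case hd: (md d); last first.
  by exfalso; apply: (no_mixed hm mX dX' (negbT hd) HX2).
move: (dX'); rewrite inE => /andP[dS adS].
have [[m1 m2 m3 m4] [t1 t2 t3 t4] [g1 g2 g3 g4] [h1 h2 h3 h4]] :=
  cross_facts r hd dS adS.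
have [_ pp3 _] := HPr (sigma d) m1.
have [_ pp4 _] := HPr (sigma (sigma d)) m2.
have Ha' : forall y, y \in X -> md y by move=> y /HX2[]->.
have Ha'' := Ha_gen Ha'.
pose s := [:: sigma m; sigma (sigma m); sigma d; sigma (sigma d);
              P r (sigma m); P r (sigma (sigma m)); P r (sigma d); P r (sigma (sigma d))].
have Hsp' : forall x, x \in N -> (P r x \in s) = (x \in s).
  apply: hsp_gen.
  - by move=> x /HPr[].
  - by move=> x xs; apply: (all8 (P := [pred x | x \in N]) _ _ _ _ _ _ _ _ xs).
  - move=> x xs; apply: (all8 (P := [pred x | P r x \in s]) _ _ _ _ _ _ _ _ xs);
    by rewrite /= !inE ?pp1 ?pp2 ?pp3 ?pp4 eqxx ?orbT.
have HXc : forall y, y \in X -> y \in [:: m; d].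
  by move=> y yX; rewrite !inE; case: (HX2 y yX) => ->; rewrite eqxx ?orbT.
have Hcs : forall c, c \in [:: m; d] -> sigma c \in s /\ sigma (sigma c) \in s.
  by move=> c; rewrite !inE => /orP[]/eqP->; split; rewrite /s ?inE eqxx ?orbT.
have Hnc' := Hnc_gen HXc Hcs Hsp'.
have d56 : sigma d != sigma (sigma d) by rewrite eq_sym; apply: Hs1.
have d78 : P r (sigma d) != P r (sigma (sigma d)).
  by move: d56; apply: contra => /eqP e; apply/eqP; rewrite -[LHS]pp3 e pp4.
have md' : m != d by rewrite eq_sym.
have da : d != alpha d by rewrite eq_sym; apply: Ha1.
have ad : alpha d != d by apply: Ha1.
have mad : m != alpha d by move: adS; apply: contra => /eqP <-.
have adm : alpha d != m by rewrite eq_sym.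
have dam : d != alpha m by move: amS; apply: contra => /eqP <-.
have amd : alpha m != d by rewrite eq_sym.
have amad : alpha m != alpha d by rewrite (inj_eq (@perm_inj _ alpha)).
have adam : alpha d != alpha m by rewrite eq_sym.
have us : uniq s.
  rewrite /s /= !inE !negb_or; repeat (apply/andP; split); try done;
  apply: neq_matd; rewrite ?e1 ?e2 ?e3 ?e4 ?g1 ?g2 ?g3 ?g4 //.
exact: (k2 Ha'' HPr HQr Hsp' Hnc' erefl us n1 n2 m1 m2 s1 s2 t1 t2 s3 s4 t3 t4
           f1 f2 f3 f4 h1 h2 h3 h4).
Qed.

End Flip.

Lemma iter_orb (D : finType) (sigma : {perm D}) d i :
  (forall d, sigma (sigma (sigma d)) = d) ->
  let y := iter i sigma d in [\/ y = d, y = sigma d | y = sigma (sigma d)].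
Proof.
move=> H3; elim: i => [|i IH] /=; first by apply: Or31.
case: IH => ->; [apply: Or32| apply: Or33 | apply: Or31] => //.
Qed.

Lemma pmg_L (D : finType) (alpha sigma : {perm D}) n (ord : 'I_n -> D) :
  (forall d, [/\ sigma d != d, sigma (sigma d) != d & sigma (sigma (sigma d)) = d]) ->
  (forall d, #|[set d' in porbit sigma d | mdart alpha ord d']| = 1) ->
  (forall d, mdart alpha ord d ->
     ~~ mdart alpha ord (sigma d) && ~~ mdart alpha ord (sigma (sigma d))) /\
  (forall d, ~~ mdart alpha ord d -> ~~ mdart alpha ord (sigma d) ->
     mdart alpha ord (sigma (sigma d))).
Proof.
move=> Hs Hone.
have in1 d : sigma d \in porbit sigma d by rewrite -(expg1 sigma) mem_porbit.
have in2 d : sigma (sigma d) \in porbit sigma d.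
  by have := mem_porbit sigma 2 d; rewrite expgS expg1 permM.
have two d y : y \in porbit sigma d -> y != d -> mdart alpha ord d ->
   mdart alpha ord y -> False.
  move=> yo yd md my.
  have : #|[set y; d]| <= #|[set d' in porbit sigma d | mdart alpha ord d']|.
    apply: subset_leq_card; apply/subsetP => z /set2P[]->; rewrite inE ?yo ?my //.
    by rewrite porbit_id md.
  by rewrite cards2 yd Hone.
split.
  move=> d md; apply/andP; split; apply/negP => h.
    by apply: (two d (sigma d)) => //; have [] := Hs d.
  by apply: (two d (sigma (sigma d))) => //; have [] := Hs d.
move=> d n1 n2.
have : #|[set d' in porbit sigma d | mdart alpha ord d']| != 0 by rewrite Hone.
rewrite cards_eq0 => /set0Pn[y]; rewrite inE => /andP[/porbitP[i ->] my].
have H3 d0 : sigma (sigma (sigma d0)) = d0 by have [] := Hs d0.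
move: my; rewrite permX; case: (iter_orb d i H3) => -> //.
- by rewrite (negbTE n1).
- by rewrite (negbTE n2).
Qed.

Theorem mainTheorem8 (D : finType) (alpha sigma sigma' : {perm D}) (n : nat)
    (ord : 'I_n -> D) (S : {set D}) :
  is_pmg alpha sigma ord ->
  is_flip alpha sigma sigma' S ->
  (has_bad_face alpha sigma ord <-> has_bad_face alpha sigma' ord).
Proof.
move=> [HA HSg _ _ Hone] [HS HX Hsg].
have Haa d : alpha (alpha d) = d by have [] := HA d.
have Ha1 d : alpha d != d by have [] := HA d.
have Hs1 d : sigma d != d by have [] := HSg d.
have Hs3 d : sigma (sigma (sigma d)) = d by have [] := HSg d.
have [L1 L2] := pmg_L HSg Hone.
have Hc (c : rconf n) : circles alpha sigma' ord c = circles alpha sigma ord c.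
  exact: (circ_eq Haa Ha1 Hs1 Hs3 L1 L2 HS Hsg HX c.1).
have E1 c i : eta_arc alpha sigma' ord c i = eta_arc alpha sigma ord c i.
  by rewrite /eta_arc !Hc.
have E2 c i : delta_arc alpha sigma' ord c i = delta_arc alpha sigma ord c i.
  by rewrite /delta_arc !Hc.
have E3 c i : m_arc alpha sigma' ord c i = m_arc alpha sigma ord c i.
  by rewrite /m_arc !Hc.
rewrite /has_bad_face; split => -[v [u [i [j [H1 [H2 H3 H4 H5]]]]]];
  exists v, u, i, j; split => //; move: H2 H3 H4 H5; rewrite ?E1 ?E2 ?E3 => H2 H3 H4 H5; by split.
Qed.
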